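(* Given an instance with goods and identical valuations (all agents have the same value function $v$ on items and the same quantile $\tau$) with $m=kn$, the greedy algorithm below returns a balanced allocation of maximum utilitarian social welfare among balanced allocations. Greedy algorithm: set $P\leftarrow M$, $N'\leftarrow N$, and $k_i\leftarrow\min(k,\,k-\lceil\tau_i k\rceil+1)$ for each $i$. While $P\neq\emptyset$: for each $i\in N'$ let $S_i$ be a subset of $P$ of size $k_i$ maximizing $\sum_{g\in S_i}v_i(g)$; let $i^*\in N'$ maximize $v_{i^*}(S_{i^*})$; set $A_{i^*}\leftarrow S_{i^*}$, $P\leftarrow P\setminus A_{i^*}$, $N'\leftarrow N'\setminus\{i^*\}$. Finally allocate any remaining items arbitrarily so that $|A_i|=k$ for all $i\in N$.
   Context: There is a set $N$ of $n$ agents and a set $M$ of $m$ indivisible items. Each agent $i$ has a value $v_i(g)\ge0$ for each item and a quantile $\tau_i\in[0,1]$; here $v_i=v$ and $\tau_i=\tau$ for all $i$. For a nonempty bundle $S\subseteq M$, order its items as $g_1,\dots,g_{|S|}$ with $v_i(g_1)\le\dots\le v_i(g_{|S|})$; then $v_i(S)=v_i(g_{\lceil \tau_i|S|\rceil})$ if $\tau_i>0$ and $v_i(S)=v_i(g_1)$ if $\tau_i=0$. An allocation is an $n$-partition $A=(A_1,\dots,A_n)$ of $M$; when $m=kn$ it is balanced if $|A_i|=k$ for all $i$. $\mathrm{USW}(A)=\sum_{i\in N}v_i(A_i)$. *)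

(* Defs.v *)
From HB Require Import structures.
From mathcomp Require Import all_boot all_order all_algebra.
Set Implicit Arguments. Unset Strict Implicit. Unset Printing Implicit Defensive.
Import Order.TTheory GRing.Theory Num.Theory.
Local Open Scope ring_scope.

Section QuantileAlloc.
(* Identical valuations: one value function v and one quantile tau for all agents. *)
Variables (R : archiRealFieldType) (M : finType) (n k : nat) (v : M -> R) (tau : R).

(* 0-based index of the item g_{ceil(tau |S|)} (or g_1 when tau = 0) in the
   nondecreasing ordering of a bundle of size s. *)
Definition qidx (s : nat) : nat :=
  if 0 < tau then (absz (Num.ceil (tau * s%:R))).-1 else 0%N.

(* quantile value of a bundle: v(g_{ceil(tau|S|)}) (0 for the empty bundle) *)
Definition bval (S : {set M}) : R :=
  nth 0 (sort <=%R [seq v g | g <- enum S]) (qidx #|S|).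

Definition USW (A : {ffun 'I_n -> {set M}}) : R := \sum_(i < n) bval (A i).

Definition is_alloc (A : {ffun 'I_n -> {set M}}) : Prop :=
  (forall i j, i != j -> [disjoint A i & A j]) /\ \bigcup_(i < n) A i = [set: M].

Definition balanced (A : {ffun 'I_n -> {set M}}) : Prop :=
  is_alloc A /\ forall i, #|A i| = k.

Definition kq : nat :=
  absz (Num.min (k%:Z) (k%:Z - Num.ceil (tau * k%:R) + 1)).

Definition best_subset (P T : {set M}) : Prop :=
  [/\ T \subset P, #|T| = kq &
      forall T' : {set M}, T' \subset P -> #|T'| = kq ->
        \sum_(g in T') v g <= \sum_(g in T) v g].

Inductive greedy_reach : {set M} -> {set 'I_n} -> {ffun 'I_n -> {set M}} -> Prop :=
| gr_init : greedy_reach [set: M] [set: 'I_n] [ffun => set0]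
| gr_step (P : {set M}) (N' : {set 'I_n}) (A : {ffun 'I_n -> {set M}})
    (S : 'I_n -> {set M}) (istar : 'I_n) :
    greedy_reach P N' A ->
    P != set0 ->
    istar \in N' ->
    (forall i, i \in N' -> best_subset P (S i)) ->
    (forall i, i \in N' -> bval (S i) <= bval (S istar)) ->
    greedy_reach (P :\: S istar) (N' :\ istar)
      [ffun j => if j == istar then S istar else A j].

(* B is a possible output: the loop has stopped (P empty, or no agents left),
   and B is a balanced allocation obtained by allocating the remaining items
   arbitrarily, i.e. extending each A_i. *)
Definition greedy_output (B : {ffun 'I_n -> {set M}}) : Prop :=
  exists P N' A, [/\ greedy_reach P N' A, (P = set0 \/ N' = set0),
                     balanced B & forall i, A i \subset B i].

End QuantileAlloc.

(* Main.v *)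
Require Import Defs.
From HB Require Import structures.
From mathcomp Require Import all_boot all_order all_algebra.
From mathcomp Require Import zify lra.
Import Order.TTheory GRing.Theory Num.Theory.
Set Implicit Arguments. Unset Strict Implicit. Unset Printing Implicit Defensive.
Local Open Scope ring_scope.

Section Lists.
Variable R : archiRealFieldType.

Lemma exists_max (T : eqType) (f : T -> R) (s : seq T) : s != [::] ->
  exists2 x, x \in s & forall y, y \in s -> f y <= f x.
Proof.
elim: s => [//|a s IH] _.
case: s IH => [|b s] IH.
  by exists a; [rewrite mem_head | move=> y; rewrite inE => /eqP->].
have [x xin xmax] := IH isT.
case: (leP (f a) (f x)) => ha.
  exists x; first by rewrite inE xin orbT.
  by move=> y; rewrite inE => /orP[/eqP->//|]; exact: xmax.
exists a; first by rewrite mem_head.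
move=> y; rewrite inE => /orP[/eqP->//|/xmax h].
exact: le_trans h (ltW ha).
Qed.

Lemma dom_sum_n (N : nat) : forall b c : seq R, size b = N -> size c = N ->
  (forall t, (count (fun x => (t <= x)%R) b <= count (fun x => (t <= x)%R) c)%N) ->
  \sum_(x <- b) x <= \sum_(x <- c) x.
Proof.
elim: N => [|N IH] b c hb hc hcnt.
  by rewrite (size0nil hb) (size0nil hc) !big_nil.
have bn : b != [::] by rewrite -size_eq0 hb.
have cn : c != [::] by rewrite -size_eq0 hc.
have [x xb xmax] := @exists_max _ id b bn.
have [y yc ymax] := @exists_max _ id c cn.
have xy : x <= y.
  have : (0 < count (fun z => (x <= z)%R) c)%N.
    apply: leq_trans (hcnt x); rewrite -has_count; apply/hasP; by exists x.
  rewrite -has_count => /hasP [z zc xz]; exact: le_trans xz (ymax z zc).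
rewrite (perm_big _ (perm_to_rem xb)) (perm_big _ (perm_to_rem yc)) !big_cons.
apply: lerD => //.
apply: IH; rewrite ?size_rem //; first by rewrite hb.
  by rewrite hc.
move=> t; rewrite !count_rem xb yc /=.
case: (leP t x) => tx.
  rewrite (le_trans tx xy); apply: leq_sub2r; exact: hcnt.
have -> : count (fun z => (t <= z)%R) b = 0%N.
  apply/eqP; rewrite -leqn0 leqNgt -has_count; apply/hasP => [[z zb tz]].
  have := le_lt_trans (xmax z zb) tx; by rewrite ltNge tz.
by [].
Qed.

Lemma dom_sum (b c : seq R) : size b = size c ->
  (forall t, (count (fun x => (t <= x)%R) b <= count (fun x => (t <= x)%R) c)%N) ->
  \sum_(x <- b) x <= \sum_(x <- c) x.
Proof. move=> h; exact: (@dom_sum_n (size c) b c h erefl). Qed.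

Lemma sorted_ge (l : seq R) i t : sorted <=%R l -> (i < size l)%N ->
  (t <= nth 0 l i) = (count (fun x => (x < t)%R) l <= i)%N.
Proof.
move=> so il; apply/idP/idP.
  move=> h; rewrite -(cat_take_drop i l) count_cat.
  have -> : count (fun x => (x < t)%R) (drop i l) = 0%N.
    apply/eqP; rewrite -leqn0 leqNgt -has_count; apply/hasP => [[z zd zt]].
    move/(nthP 0): zd => [j jl <-] in zt.
    rewrite nth_drop in zt.
    rewrite size_drop in jl.
    have : nth 0 l i <= nth 0 l (i + j)%N.
      have jl2 : (j < size l - i)%N := jl.
      apply: le_sorted_leq_nth => //; [rewrite unfold_in /=; lia | exact: leq_addr].
    move=> hh; have := le_trans h hh; by rewrite leNgt zt.
  rewrite addn0; apply: leq_trans (count_size _ _) _; rewrite size_take il //.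
apply: contraLR; rewrite -ltNge => h.
rewrite -ltnNge; apply: (@leq_trans (count (fun x => (x < t)%R) (take i.+1 l))).
  have -> : count (fun x => (x < t)%R) (take i.+1 l) = size (take i.+1 l).
    apply/eqP; rewrite -all_count; apply/allP => z /(nthP 0) [j jl <-].
    rewrite size_take_min in jl; rewrite nth_take; last by lia.
    apply: le_lt_trans h; apply: le_sorted_leq_nth => //; [rewrite unfold_in /=; lia|lia].
  by rewrite size_take_min; lia.
by rewrite -{2}(cat_take_drop i.+1 l) count_cat leq_addr.
Qed.

End Lists.

Lemma disjI (T : finType) (A B : {set T}) :
  (forall x, x \in A -> x \in B -> False) -> [disjoint A & B].
Proof.
move=> h; rewrite disjoint_subset; apply/subsetP => x xA; rewrite inE.
apply/negP => xB; exact: h x xA xB.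
Qed.

Section Bval.
Variables (R : archiRealFieldType) (M : finType) (k : nat) (v : M -> R) (tau : R).
Hypotheses (ht0 : 0 <= tau) (ht1 : tau <= 1) (hk : (0 < k)%N).

Lemma kq_facts : (0 < kq k tau)%N /\ (qidx tau k + kq k tau = k)%N.
Proof.
rewrite /kq /qidx.
case: (ltP 0 tau) => htau.
  have c1 : 0 < Num.ceil (tau * k%:R) by rewrite ceil_gt0 mulr_gt0 // ltr0n.
  have ck : Num.ceil (tau * k%:R) <= k%:Z.
    rewrite ceil_le_int; apply: le_trans (ler_wpM2r (ler0n _ _) ht1) _.
    by rewrite mul1r pmulrn.
  move: c1 ck; case: (Num.ceil _) => [m|m] c1 ck //.
  by split; lia.
have -> : tau = 0 by apply/eqP; rewrite eq_le htau ht0.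
by rewrite mul0r ceil0; split; lia.
Qed.

Definition Up (t : R) : {set M} := [set g | t <= v g].

Lemma count_bag (S : {set M}) t :
  count (fun x => (t <= x)%R) (sort <=%R [seq v g | g <- enum S]) = #|S :&: Up t|.
Proof.
rewrite ((permP (permEl (perm_sort _ _))) (fun x => (t <= x)%R)) count_map cardE.
rewrite (perm_size (enum_setI _ _)) size_filter.
by apply: eq_count => g; rewrite /Up !inE.
Qed.

Lemma bval_ge (S : {set M}) t : #|S| = k ->
  (t <= bval v tau S) = (kq k tau <= #|S :&: Up t|)%N.
Proof.
move=> hS; rewrite /bval.
have [kq1 kqe] := kq_facts.
set l := sort _ _.
have sl : size l = k by rewrite size_sort size_map -cardE.
rewrite sorted_ge; first last.
- by rewrite sl hS; lia.
- apply: sort_sorted => x y; exact: le_total.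
have e : count (fun x => (x < t)%R) l = (size l - count (fun x => (t <= x)%R) l)%N.
  rewrite -(count_predC (fun x => (t <= x)%R) l) addKn; apply: eq_count => x.
  by rewrite /= ltNge.
have cle : (#|S :&: Up t| <= #|S|)%N by apply: subset_leq_card; apply: subsetIl.
rewrite e count_bag sl hS; rewrite hS in cle.
apply/idP/idP; lia.
Qed.

Lemma best_swap (P S : {set M}) h g : best_subset k v tau P S ->
  h \in P -> h \notin S -> g \in S -> v h <= v g.
Proof.
case=> sP cS hmax hP hS gS.
have hS' : h \notin S :\ g by rewrite !inE negb_and hS orbT.
have := hmax (h |: (S :\ g)).
rewrite (big_setU1 _ hS') (big_setD1 _ gS) lerD2r.
apply.
  apply/subsetP => x; rewrite !inE => /orP[/eqP->//|/andP[_ xS]].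
  exact: (subsetP sP).
rewrite cardsU1 hS' -cS (cardsD1 g S) gS; by [].
Qed.

End Bval.

Section Greedy.
Variables (R : archiRealFieldType) (M : finType) (n k : nat) (v : M -> R) (tau : R).
Hypotheses (ht0 : 0 <= tau) (ht1 : tau <= 1) (hk : (0 < k)%N).

Local Notation kq' := (kq k tau).
Local Notation U := (Up v).

Record Inv (P : {set M}) (N' : {set 'I_n}) (A : {ffun 'I_n -> {set M}}) : Prop := MkInv {
  inv1 : forall i, i \in N' -> A i = set0;
  inv2 : forall i, i \notin N' -> #|A i| = kq';
  inv3 : forall i j, i != j -> [disjoint A i & A j];
  inv4 : P = ~: \bigcup_i A i;
  inv5 : forall i g h, i \notin N' -> g \in A i -> h \in P -> v h <= v g;
  inv6 : forall X : {set M}, #|X| = (#|X :&: P| + \sum_i #|X :&: A i|)%N;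
  inv7 : forall t, (exists i g, [/\ i \notin N', g \in A i & v g < t]) ->
        (#|U t| < kq' * (#|[set i | (i \notin N') && (A i \subset U t)]|).+1)%N }.

Lemma Inv_init : Inv [set: M] [set: 'I_n] [ffun => set0].
Proof.
split.
- by move=> i _; rewrite ffunE.
- by move=> i; rewrite inE.
- by move=> i j _; rewrite !ffunE; apply: disjI => x; rewrite inE.
- apply/setP => x; rewrite !inE; apply/esym/negP => /bigcupP [i _]; by rewrite ffunE inE.
- by move=> i g h; rewrite inE.
- move=> X; rewrite setIT big1 ?addn0 // => i _; by rewrite ffunE setI0 cards0.
- by move=> t [i [g [ ]]]; rewrite inE.
Qed.

Lemma sumA_const P N' A (Y : {set M}) : Inv P N' A ->
  (forall i, i \notin N' -> A i \subset Y) ->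
  (\sum_i #|Y :&: A i| = #|~: N'| * kq')%N.
Proof.
case=> h1 h2 _ _ _ _ _ hY.
rewrite -sum_nat_const [RHS]big_mkcond /=; apply: eq_bigr => i _.
rewrite inE; case: ifP => hi.
  by rewrite (setIidPr (hY i hi)) h2.
by rewrite (h1 i (negbFE hi)) setI0 cards0.
Qed.

Lemma Inv_step P N' A S istar : Inv P N' A -> istar \in N' ->
  best_subset k v tau P S ->
  Inv (P :\: S) (N' :\ istar) [ffun j => if j == istar then S else A j].
Proof.
move=> I hi hb; have I0 := I; case: I => h1 h2 h3 h4 h5 h6 h7.
have [kq1 _] := kq_facts ht0 ht1 hk.
have hb' := hb; case: hb' => sP cS _.
have Ai : A istar = set0 by apply: h1.
have dSA : forall j, j != istar -> [disjoint S & A j].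
  move=> j _; apply: disjI => x xS xj.
  have := subsetP sP x xS; rewrite h4 inE => /negP; apply.
  by apply/bigcupP; exists j.
have notin : forall i, i \notin N' :\ istar -> i != istar -> i \notin N'.
  by move=> i; rewrite !inE negb_and negbK => /orP[/eqP->|]; rewrite ?eqxx.
split.
- move=> i; rewrite !inE ffunE => /andP[/negbTE-> iN]; exact: h1.
- move=> i hi'; rewrite ffunE; case: eqP => [//|/eqP ne].
  by apply: h2; apply: notin.
- move=> i j ij; rewrite !ffunE.
  case: eqP => [ei|/eqP ni]; case: eqP => [ej|/eqP nj].
  + by rewrite ei ej eqxx in ij.
  + by apply: dSA.
  + by rewrite disjoint_sym; apply: dSA.
  + exact: h3.
- have -> : \bigcup_i [ffun j => if j == istar then S else A j] i = S :|: \bigcup_i A i.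
    apply/setP => x; rewrite inE; apply/bigcupP/orP.
      move=> [i _]; rewrite ffunE; case: eqP => _ xi; first by left.
      by right; apply/bigcupP; exists i.
    case=> [xS|/bigcupP [i _ xi]]; first by exists istar; rewrite // ffunE eqxx.
    exists i => //; rewrite ffunE; case: eqP => // ei.
    by rewrite ei Ai inE in xi.
  by rewrite setCU h4 setDE setIC.
- move=> i g h hi'; rewrite ffunE; case: eqP => [ei gS|/eqP ne gA].
    rewrite inE => /andP[hS hP]; exact: (best_swap hb hP hS gS).
  rewrite inE => /andP[_ hP]; apply: (h5 i) => //; exact: notin.
- move=> X; rewrite (h6 X).
  rewrite (bigD1 istar) //= (bigD1 istar (P := predT)) //= ffunE eqxx Ai setI0 cards0 add0n.
  have -> : (\sum_(i | i != istar) #|X :&: [ffun j => if j == istar then S else A j] i|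
     = \sum_(i | i != istar) #|X :&: A i|)%N.
    by apply: eq_bigr => i /negbTE ne; rewrite ffunE ne.
  rewrite addnA; congr (_ + _)%N.
  rewrite -(cardsID S (X :&: P)) addnC; congr (_ + _)%N.
    by rewrite !setDE setIA.
  by rewrite -setIA (setIidPr sP).
- move=> t [i [g [hi' gA gt]]].
  set NS := [set i | _].
  case: (boolP [exists i, exists g, [&& i \notin N', g \in A i & v g < t]]).
  + move=> /existsP [i0 /existsP [g0 /and3P [i0N g0A g0t]]].
    have : S != set0 by rewrite -card_gt0 cS.
    case/set0Pn => x xS.
    have xt : v x < t.
      apply: le_lt_trans g0t; apply: (h5 i0) => //; exact: (subsetP sP).
    have -> : NS = [set i | (i \notin N') && (A i \subset U t)].
      apply/setP => j; rewrite !inE ffunE.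
      case: eqP => [->|/eqP ne]; first rewrite ?hi /=.
        apply/negbTE.
        apply/negP => /subsetP /(_ x xS); by rewrite inE leNgt xt.
      by [].
    apply: h7; by exists i0, g0.
  + rewrite negb_exists => /forallP hall.
    have allU : forall j, j \notin N' -> A j \subset U t.
      move=> j jN; apply/subsetP => y yA; rewrite inE leNgt.
      move: (hall j); rewrite negb_exists => /forallP /(_ y).
      by rewrite jN yA.
    have iis : i = istar.
      apply/eqP; apply/negPn/negP => ne; move: gA; rewrite ffunE (negbTE ne) => gA.
      move: (hall i); rewrite negb_exists => /forallP /(_ g).
      by rewrite (notin i hi' ne) gA gt.
    subst i; move: gA; rewrite ffunE eqxx => gS.
    have -> : NS = ~: N'.
      apply/setP => j; rewrite !inE ffunE.
      case: eqP => [->|/eqP ne]; first rewrite ?hi /=.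
        apply/negbTE.
        apply/negP => /subsetP /(_ g gS); by rewrite inE leNgt gt.
      rewrite /=; case: (boolP (j \in N')) => //= jN.
      by rewrite allU.
    rewrite (h6 (U t)) (sumA_const (Y := U t) I0 allU).
    have : (#|U t :&: P| < kq')%N.
      apply: (@leq_ltn_trans #|S :&: U t|).
        apply: subset_leq_card; apply/subsetP => y; rewrite !inE => /andP[yt yP].
        rewrite yt andbT; apply/negPn/negP => yS.
        have := best_swap hb yP yS gS => hyg.
        by have := lt_le_trans (le_lt_trans hyg gt) yt; rewrite ltxx.
      rewrite -cS -(cardsID (U t) S) -addn1 leq_add2l card_gt0.
      apply/set0Pn; exists g; by rewrite !inE gS leNgt gt.
    rewrite mulnS; lia.
Qed.

Lemma reach_inv P N' A : greedy_reach k v tau P N' A -> Inv P N' A.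
Proof.
elim => [|P0 N0 A0 S0 istar _ IH _ hi hb _]; first exact: Inv_init.
by apply: Inv_step => //; apply: hb.
Qed.

End Greedy.

Section Final.
Variables (R : archiRealFieldType) (M : finType) (n k : nat) (v : M -> R) (tau : R).
Hypotheses (ht0 : 0 <= tau) (ht1 : tau <= 1) (hk : (0 < k)%N) (hm : #|M| = (k * n)%N).

Local Notation kq' := (kq k tau).

Lemma kq_le : (kq' <= k)%N.
Proof. have [_ e] := kq_facts ht0 ht1 hk; lia. Qed.

Lemma cardP_eq P N' (A : {ffun 'I_n -> {set M}}) : Inv k v tau P N' A ->
  (k * n = #|P| + #|~: N'| * kq')%N.
Proof.
move=> I; have := inv6 I setT.
rewrite setTI (sumA_const (Y := setT) I) ?cardsT -?hm //.
Qed.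

Lemma final_N P N' (A : {ffun 'I_n -> {set M}}) : Inv k v tau P N' A ->
  (P = set0 \/ N' = set0) -> N' = set0.
Proof.
move=> I [P0|//]; apply/eqP; apply/negPn/negP => hN.
have e := cardP_eq I; rewrite P0 cards0 add0n in e.
have c := cardsC N'; rewrite card_ord in c.
have c0 : (0 < #|N'|)%N by rewrite card_gt0.
have l1 : (#|~: N'| * kq' <= #|~: N'| * k)%N by rewrite leq_mul2l kq_le orbT.
have l2 : (#|~: N'| * k < n * k)%N by rewrite ltn_pmul2r //; lia.
lia.
Qed.

Lemma exists_best (P : {set M}) : (kq' <= #|P|)%N -> exists S, best_subset k v tau P S.
Proof.
move=> hP.
set C := enum [set T : {set M} | (T \subset P) && (#|T| == kq')].
have Cn : C != [::].
  apply/eqP => C0.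
  set T := [set x in take kq' (enum P)].
  have : T \in C.
    rewrite mem_enum inE; apply/andP; split.
      apply/subsetP => x; rewrite inE => /mem_take; by rewrite mem_enum.
    rewrite cardsE; apply/eqP; rewrite (card_uniqP _) ?take_uniq ?enum_uniq //.
    by rewrite size_takel // -cardE.
  by rewrite C0.
have [S SC Smax] := exists_max (fun T : {set M} => \sum_(g in T) v g) Cn.
move: SC; rewrite mem_enum inE => /andP[sP /eqP cS].
exists S; split => // T' sT' cT'.
apply: Smax; by rewrite mem_enum inE sT' cT' eqxx.
Qed.

Lemma run_exists d : forall P (N' : {set 'I_n}) A, greedy_reach k v tau P N' A -> #|N'| = d ->
  exists P2 (N2 : {set 'I_n}) A2, greedy_reach k v tau P2 N2 A2 /\ (P2 = set0 \/ N2 = set0).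
Proof.
elim: d => [|d IH] P N' A hr hd.
  by exists P, N', A; split => //; right; apply: cards0_eq.
have [P0|Pn] := eqVneq P set0; first by exists P, N', A; split => //; left.
have : N' != set0 by rewrite -card_gt0 hd.
case/set0Pn => istar hi.
have I := reach_inv ht0 ht1 hk hr.
have e := cardP_eq I.
have c := cardsC N'; rewrite card_ord in c.
have [S hS] : exists S, best_subset k v tau P S.
  apply: exists_best.
  have l1 : (#|~: N'| * kq' <= #|~: N'| * k)%N by rewrite leq_mul2l kq_le orbT.
  have l2 : (#|~: N'| * k <= (n - 1) * k)%N by rewrite leq_mul2r; apply/orP; right; lia.
  have l3 := kq_le.
  have l4 : ((n - 1) * k = n * k - k)%N by rewrite mulnBl mul1n.
  have l5 : (k <= n * k)%N by rewrite leq_pmull //; lia.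
  lia.
have hr2 := gr_step hr Pn hi (S := fun _ => S) (fun _ _ => hS) (fun _ _ => lexx _).
apply: (IH _ _ _ hr2).
by move: hd; rewrite (cardsD1 istar N') hi add1n => -[].
Qed.

End Final.

Section Extend.
Variables (M : finType) (n k : nat).

Lemma extend d : forall A : {ffun 'I_n -> {set M}},
  (forall i j, i != j -> [disjoint A i & A j]) -> (forall i, #|A i| <= k)%N ->
  (\sum_i (k - #|A i|))%N = d -> #|~: \bigcup_i A i| = d ->
  exists B, balanced k B /\ forall i, A i \subset B i.
Proof.
elim: d => [|d IH] A hd hs hsum hc.
  exists A; split => //; split; first split => //.
    have h := cards0_eq hc.
    by rewrite -[LHS]setCK h setC0.
  move=> i; move/eqP: hsum; rewrite sum_nat_eq0 => /forallP /(_ i) /= /eqP.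
  have := hs i; lia.
have [i0 hi0] : exists i0, (#|A i0| < k)%N.
  case: (boolP [exists i, (#|A i| < k)%N]) => [/existsP //|].
  rewrite negb_exists => /forallP h.
  have : (\sum_i (k - #|A i|) = 0)%N.
    by apply: big1 => i _; have := h i; rewrite -leqNgt; lia.
  by move=> e; rewrite e in hsum.
have : (~: \bigcup_i A i) != set0 by rewrite -card_gt0 hc.
case/set0Pn => x; rewrite inE => hx.
have xA : forall j, x \notin A j.
  move=> j; apply/negP => xj; move/negP: hx; apply; by apply/bigcupP; exists j.
set A2 := [ffun j => if j == i0 then x |: A i0 else A j].
have [B [hB sub]] : exists B, balanced k B /\ forall i, A2 i \subset B i.
  apply: IH.
- move=> i j ij; rewrite /A2 !ffunE.
  case: eqP => [ei|/eqP ni]; case: eqP => [ej|/eqP nj].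
  + by rewrite ei ej eqxx in ij.
  + apply: disjI => y; rewrite !inE => /orP[/eqP->|yi] yj.
      by move: (xA j); rewrite yj.
    by rewrite ei in ij; rewrite (disjointFr (hd _ _ ij) yi) in yj.
  + rewrite disjoint_sym; apply: disjI => y; rewrite !inE => /orP[/eqP->|yi] yj.
      by move: (xA i); rewrite yj.
    by rewrite ej in ij; rewrite eq_sym in ij; rewrite (disjointFr (hd _ _ ij) yi) in yj.
  + exact: hd.
- move=> i; rewrite /A2 ffunE; case: eqP => [_|_]; last exact: hs.
  by rewrite cardsU1 xA.
- rewrite (bigD1 i0) //= in hsum; rewrite (bigD1 i0) //= /A2 ffunE eqxx cardsU1 xA.
  have -> : (\sum_(i | i != i0) (k - #|[ffun j => if j == i0 then x |: A i0 else A j] i|)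
     = \sum_(i | i != i0) (k - #|A i|))%N.
    by apply: eq_bigr => i /negbTE ne; rewrite ffunE ne.
  move: hsum; set S1 := (\sum_(i | i != i0) (k - #|A i|))%N; move=> hsum.
  lia.
- have -> : \bigcup_i A2 i = x |: \bigcup_i A i.
    apply/setP => y; rewrite in_setU1; apply/idP/idP.
      case/bigcupP => i _; rewrite /A2 ffunE; case: eqP => _.
        rewrite in_setU1 => /orP[->//|yi]; apply/orP; right; apply/bigcupP; by exists i0.
      move=> yi; apply/orP; right; apply/bigcupP; by exists i.
    case/orP => [/eqP ->|/bigcupP [i _ yi]]; apply/bigcupP.
      by exists i0 => //; rewrite /A2 ffunE eqxx setU11.
    exists i => //; rewrite /A2 ffunE; case: eqP => // ei; by rewrite in_setU1 -ei yi orbT.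
  move: hc; rewrite (cardsD1 x) inE hx add1n => -[<-].
  apply: eq_card => y; rewrite !inE negb_or andbC //.
exists B; split => // i; apply: subset_trans (sub i).
rewrite /A2 ffunE; case: eqP => [->|_]; [exact: subsetU1 | exact: subxx].
Qed.

Lemma disj_sum (F : 'I_n -> {set M}) :
  (forall i j, i != j -> [disjoint F i & F j]) ->
  forall N (I : {set 'I_n}), #|I| = N ->
  (\sum_(i in I) #|F i| = #|\bigcup_(i in I) F i|)%N.
Proof.
move=> hd; elim=> [|N IH] I hI.
  by rewrite (cards0_eq hI) !big_set0 cards0.
have : I != set0 by rewrite -card_gt0 hI.
case/set0Pn => j jI.
rewrite (big_setD1 j jI) (big_setD1 j jI) /= cardsU.
rewrite -(IH (I :\ j)); last by move: hI; rewrite (cardsD1 j) jI => -[].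
have -> : F j :&: \bigcup_(i in I :\ j) F i = set0.
  apply/setP => x; rewrite !inE; apply/negP => /andP[xj /bigcupP [i iI xi]].
  have ij : i != j by move: iI; rewrite !inE => /andP[].
  by rewrite (disjointFr (hd _ _ ij) xi) in xj.
by rewrite cards0 subn0.
Qed.

End Extend.

Lemma usw0 (R : archiRealFieldType) (M : finType) (n : nat) (v : M -> R) (tau : R)
  (B : {ffun 'I_n -> {set M}}) : balanced 0 B -> USW v tau B = 0.
Proof.
case=> _ hs; rewrite /USW big1 // => i _.
by rewrite /bval (cards0_eq (hs i)) enum_set0 nth_default // size_sort.
Qed.

Lemma cnt_map (R : archiRealFieldType) (n : nat) (f : 'I_n -> R) t :
  count (fun x => (t <= x)%R) [seq f i | i <- index_enum 'I_n] = #|[set i | t <= f i]|.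
Proof.
rewrite count_map -size_filter deprecated_filter_index_enum -cardE.
by apply: eq_card => i; rewrite !inE.
Qed.

Theorem theorem11 (R : archiRealFieldType) (M : finType) (n k : nat)
    (v : M -> R) (tau : R)
    (hm : #|M| = (k * n)%N)
    (hv : forall g, 0 <= v g)
    (ht0 : 0 <= tau) (ht1 : tau <= 1) :
  (exists B, @greedy_output R M n k v tau B) /\
  (forall B, @greedy_output R M n k v tau B ->
     @balanced M n k B /\
     forall A, @balanced M n k A -> @USW R M n v tau A <= @USW R M n v tau B).
Proof.
have [k0|hk] := posnP k.
  subst k.
  have T0 : [set: M] = set0 by apply: cards0_eq; rewrite cardsT hm.
  split.
    exists [ffun => set0], [set: M], [set: 'I_n], [ffun => set0]; split.
    - exact: gr_init.
    - by left.
    - split; first split.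
      + by move=> i j _; rewrite !ffunE; apply: disjI => x; rewrite inE.
      + apply/setP => x; have : x \in [set: M] by rewrite inE.
        by rewrite T0 inE.
      + by move=> i; rewrite ffunE cards0.
    - by move=> i; rewrite ffunE.
  move=> B [P [N' [A [_ _ hB _]]]]; split => // A' hA'.
  by rewrite !usw0.
split.
  have [P2 [N2 [A2 [hr hstop]]]] :=
    run_exists ht0 ht1 hk hm (d := n) (@gr_init R M n k v tau) (etrans (cardsT _) (card_ord n)).
  have I := reach_inv ht0 ht1 hk hr.
  have N0 := final_N ht0 ht1 hk hm I hstop.
  have e := cardP_eq hm I.
  rewrite N0 setC0 cardsT card_ord in e.
  have [kq1 _] := kq_facts ht0 ht1 hk.
  have kl := @kq_le R M n k tau ht0 ht1 hk hm.
  have cA : forall i, #|A2 i| = kq k tau by move=> i; apply: (inv2 I); rewrite N0 inE.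
  have hs : forall i, (#|A2 i| <= k)%N by move=> i; rewrite cA.
  have hsum : (\sum_i (k - #|A2 i|))%N = #|P2|.
    rewrite (eq_bigr (fun _ => k - kq k tau)%N) ?sum_nat_const ?card_ord;
      last by move=> i _; rewrite cA.
    rewrite mulnBr; lia.
  have hc : #|~: \bigcup_i A2 i| = #|P2| by rewrite -(inv4 I).
  have [B [hB sub]] := @extend M n k #|P2| A2 (inv3 I) hs hsum hc.
  by exists B, P2, N2, A2; split.
move=> B [P [N' [A [hr hstop hB sub]]]]; split => // A' hA'.
have I := reach_inv ht0 ht1 hk hr.
have N0 := final_N ht0 ht1 hk hm I hstop.
have [kq1 _] := kq_facts ht0 ht1 hk.
have cA : forall i, #|A i| = kq k tau by move=> i; apply: (inv2 I); rewrite N0 inE.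
have : forall i : 'I_n, exists c : R,
    (exists2 g, g \in A i & v g = c) /\ (forall h, h \in A i -> c <= v h).
  move=> i.
  have ne : enum (A i) != [::] by rewrite -size_eq0 -cardE cA -lt0n.
  have [g gin gmin] := exists_max (fun g => - v g) ne.
  exists (v g); split; first by exists g => //; rewrite -mem_enum.
  by move=> h hA; rewrite -lerN2; apply: gmin; rewrite mem_enum.
case/fin_all_exists => c hc.
apply: (@le_trans _ _ (\sum_i c i)).
  rewrite /USW.
  have -> : \sum_(i < n) bval v tau (A' i) =
     \sum_(x <- [seq bval v tau (A' i) | i <- index_enum 'I_n]) x by rewrite big_map.
  have -> : \sum_(i < n) c i = \sum_(x <- [seq c i | i <- index_enum 'I_n]) x by rewrite big_map.
  apply: dom_sum; first by rewrite !size_map.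
  move=> t; rewrite !cnt_map.
  set I1 := [set i | t <= bval v tau (A' i)].
  have hU : (kq k tau * #|I1| <= #|Up v t|)%N.
    have hd : forall i j, i != j -> [disjoint A' i :&: Up v t & A' j :&: Up v t].
      move=> i j ij; case: hA' => [[hd _] _]; apply: disjI => x.
      rewrite !inE => /andP[xi _] /andP[xj _].
      by rewrite (disjointFr (hd _ _ ij) xi) in xj.
    have := @disj_sum M n (fun i => A' i :&: Up v t) hd _ I1 erefl.
    move=> eq1.
    apply: (@leq_trans (\sum_(i in I1) #|A' i :&: Up v t|)).
      rewrite mulnC -sum_nat_const; apply: leq_sum => i; rewrite inE => hi.
      by rewrite -(bval_ge v ht0 ht1 hk) //; case: hA' => _ ->.
    rewrite eq1; apply: subset_leq_card; apply/bigcupsP => i _; exact: subsetIr.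
  have hs : [set i | t <= c i] = [set i | (i \notin N') && (A i \subset Up v t)].
    apply/setP => j; rewrite !inE N0 inE /=; apply/idP/idP.
      move=> tc; apply/subsetP => h hA; rewrite inE; exact: le_trans tc ((hc j).2 h hA).
    move=> sb; have [g gA <-] := (hc j).1; by have := subsetP sb g gA; rewrite inE.
  case: (boolP [forall i, t <= c i]) => [/forallP hall|].
    have -> : [set i | t <= c i] = [set: 'I_n] by apply/setP => i; rewrite !inE hall.
    by rewrite cardsT max_card.
  rewrite negb_forall => /existsP [i0 hi0].
  have [g gA gc] := (hc i0).1.
  have h8 : (#|Up v t| < kq k tau * (#|[set i | (t <= c i)%R]|).+1)%N.
    rewrite hs; apply: (inv7 I); exists i0, g; split.
    - by rewrite N0 inE.
    - exact: gA.
    - by rewrite gc ltNge.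
  have := leq_ltn_trans hU h8.
  by rewrite ltn_pmul2l.
apply: ler_sum => i _.
rewrite (bval_ge v ht0 ht1 hk); last by case: hB => _ ->.
rewrite -(cA i); apply: subset_leq_card; apply/subsetP => h hA.
by rewrite !inE (subsetP (sub i) h hA) /=; exact: (hc i).2 h hA.
Qed.
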